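(* Let $K\subset\mathbb{R}^n$ be a nonempty compact set and $H$ a linear subspace of $\mathbb{R}^n$ with $1\le\dim H\le n-1$. Then the sequence $K_m:=M_H^mK$ ($M_H$ applied $m$ times) converges in the Hausdorff metric to the $H$-symmetric compact convex set \[L=\mathrm{conv}(M_HK).\]
   Context: For a linear subspace $H$, $R_Hx=2(x|H)-x$ is the reflection with respect to $H$ ($x|H$ the orthogonal projection). The Minkowski symmetrization is $M_HC:=\frac12(C+R_HC)$, with Minkowski sum $X+Y=\{x+y:x\in X,y\in Y\}$ and $tX=\{tx:x\in X\}$. $M_H^m=M_H\circ\cdots\circ M_H$ ($m$ times). $\mathrm{conv}$ denotes convex hull. *)

(* Defs.v *)
From HB Require Import structures.
From mathcomp Require Import all_boot all_order all_algebra.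
From mathcomp Require Import all_classical all_reals all_analysis.
Set Implicit Arguments. Unset Strict Implicit. Unset Printing Implicit Defensive.
Import Order.TTheory GRing.Theory Num.Theory.
Import numFieldNormedType.Exports.
Local Open Scope classical_set_scope.
Local Open Scope ring_scope.

Section Defs.
Variables (R : realType) (n : nat).
Notation V := 'rV[R]_n.

Definition dotv (u v : V) : R := \sum_(i < n) u ord0 i * v ord0 i.
Definition enorm (u : V) : R := Num.sqrt (dotv u u).

(* A linear subspace H of R^n is represented as the row space of a matrix
   H : 'M_n; membership is (v <= H)%MS and dim H = \rank H. *)
Definition in_sub (H : 'M[R]_n) (v : V) : Prop := (v <= H)%MS.

Definition proj (H : 'M[R]_n) (x : V) : V :=
  xget 0 [set p | in_sub H p /\ forall h, in_sub H h -> dotv (x - p) h = 0].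

Definition refl (H : 'M[R]_n) (x : V) : V := 2%:R *: proj H x - x.

Definition msum (X Y : set V) : set V := [set x + y | x in X & y in Y].
Definition mscale (t : R) (X : set V) : set V := [set t *: x | x in X].

Definition MH (H : 'M[R]_n) (C : set V) : set V :=
  mscale (2%:R^-1) (msum C (refl H @` C)).

Definition convhull (A : set V) : set V :=
  [set x | exists (k : nat) (w : 'I_k -> R) (p : 'I_k -> V),
      (forall i, 0 <= w i) /\ \sum_(i < k) w i = 1 /\
      (forall i, A (p i)) /\ x = \sum_(i < k) w i *: p i].

Definition is_convex (A : set V) : Prop :=
  forall x y t, A x -> A y -> 0 <= t <= 1 -> A ((1 - t) *: x + t *: y).

Definition H_symmetric (H : 'M[R]_n) (A : set V) : Prop := refl H @` A = A.

Definition eball : set V := [set u | enorm u <= 1].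

Definition hausdorff (A B : set V) : R :=
  inf [set e : R | 0 <= e /\ A `<=` msum B (mscale e eball)
                          /\ B `<=` msum A (mscale e eball)].

End Defs.

(* Main.v *)
Require Import Defs.
From HB Require Import structures.
From mathcomp Require Import all_boot all_order all_algebra.
From mathcomp Require Import all_classical all_reals all_analysis.
From mathcomp Require Import zify.
Import Order.TTheory GRing.Theory Num.Theory.
Import numFieldNormedType.Exports.
Local Open Scope classical_set_scope.
Local Open Scope ring_scope.

Section PartA.
Variables (R : realType) (n : nat) (H : 'M[R]_n).
Notation V := 'rV[R]_n.

Lemma dotv_mx (u v : V) : dotv u v = (u *m v^T) ord0 ord0.
Proof. by rewrite /dotv mxE; apply: eq_bigr => i _; rewrite mxE. Qed.

Lemma mx_self_eq0 m (u : 'rV[R]_m) : (u *m u^T) ord0 ord0 = 0 -> u = 0.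
Proof.
rewrite mxE => h; apply/rowP => i; rewrite mxE.
have P0 : forall j, predT j -> 0 <= u ord0 j * u^T j ord0.
  by move=> j _; rewrite mxE -expr2 sqr_ge0.
have := @psumr_eq0P R _ predT (fun j => u ord0 j * u^T j ord0) P0 h i isT.
by rewrite mxE => /eqP; rewrite mulf_eq0 orbb => /eqP.
Qed.

Let B := row_base H.
Let G := B *m B^T.

Lemma G_unit : G \in unitmx.
Proof.
rewrite -row_free_unit -kermx_eq0; apply/eqP/row_matrixP => i; rewrite row0.
set v := row i (kermx G).
have vG : v *m G = 0 by apply/sub_kermxP; exact: row_sub.
have : (v *m B) *m (v *m B)^T = 0.
  by rewrite trmx_mul mulmxA -(mulmxA v) -/G vG mul0mx.
move=> h; have /mx_self_eq0 vB0 : ((v *m B) *m (v *m B)^T) ord0 ord0 = 0.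
  by rewrite h mxE.
apply: (row_free_inj (row_base_free H)); by rewrite /= vB0 mul0mx.
Qed.

Definition Pm := B^T *m invmx G *m B.

Lemma PmP : Pm *m Pm = Pm.
Proof.
have -> : Pm *m Pm = B^T *m invmx G *m G *m invmx G *m B by rewrite /Pm /G !mulmxA.
by rewrite mulmxK ?G_unit.
Qed.

Lemma inH_Pm (x : V) : in_sub H (x *m Pm).
Proof.
rewrite /in_sub /Pm mulmxA; apply: (submx_trans (submxMl _ B)); by rewrite eq_row_base.
Qed.

Lemma orth_Pm (x : V) (h : V) : in_sub H h -> dotv (x - x *m Pm) h = 0.
Proof.
rewrite /in_sub -(eq_row_base H) => /submxP [a ->].
rewrite dotv_mx trmx_mul mulmxA mulmxBl.
have PB : Pm *m B^T = B^T.
  rewrite /Pm -mulmxA -/G -mulmxA mulVmx ?mulmx1 //; exact: G_unit.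
rewrite -mulmxA PB.
by rewrite subrr mul0mx mxE.
Qed.

Lemma dotv_eq0 (u : V) : dotv u u = 0 -> u = 0.
Proof. by rewrite dotv_mx => /mx_self_eq0. Qed.

Lemma dotvBl (a b c : V) : dotv (a - b) c = dotv a c - dotv b c.
Proof. by rewrite /dotv -sumrB; apply: eq_bigr => i _; rewrite !mxE mulrBl. Qed.

Lemma projE (x : V) : Defs.proj H x = x *m Pm.
Proof.
rewrite /Defs.proj.
set S := [set p | _].
have SP : S (x *m Pm) by split; [exact: inH_Pm | exact: orth_Pm].
have uniq : forall p, S p -> p = x *m Pm.
  move=> p [pH po]; apply/eqP; rewrite -subr_eq0; apply/eqP/dotv_eq0.
  have dH : in_sub H (p - x *m Pm).
    by rewrite /in_sub addmx_sub // eqmx_opp; exact: inH_Pm.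
  have h1 := po _ dH; have h2 := orth_Pm x _ dH.
  have E : p - x *m Pm = (x - x *m Pm) - (x - p) by rewrite opprB [RHS]addrC addrA subrK.
  by rewrite {1}E dotvBl h1 h2 subr0.
apply: uniq; exact: xgetPex (ex_intro _ _ SP).
Qed.

Definition Qm := 2%:R *: Pm - 1%:M.

Lemma reflE (x : V) : refl H x = x *m Qm.
Proof. by rewrite /refl projE /Qm mulmxBr mulmx1 scalemxAr. Qed.

Lemma refl_inv (x : V) : refl H (refl H x) = x.
Proof.
have rE : forall y, refl H y = 2%:R *: (y *m Pm) - y by move=> y; rewrite /refl projE.
rewrite !rE mulmxBl -scalemxAl -mulmxA PmP.
set y := x *m Pm.
rewrite scalerBr scalerA opprB addrA.
have -> : (2%:R * 2%:R : R) = 2%:R + 2%:R by rewrite -natrM -natrD.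
by rewrite scalerDl addrK addrAC subrr add0r.
Qed.

Lemma entry_le_norm m k (x : 'M[R]_(m, k)) i j : `|x i j| <= `|x|.
Proof.
change (`|x i j| <= mx_norm x); rewrite mx_normrE; apply/bigmax_geP; right => /=; by exists (i, j).
Qed.

Lemma norm_le_entries m k (x : 'M[R]_(m, k)) (M : R) :
  0 <= M -> (forall i j, `|x i j| <= M) -> `|x| <= M.
Proof.
move=> M0 hM; change (mx_norm x <= M); rewrite mx_normrE; apply/bigmax_leP; split => //.
Qed.


Lemma le_sum_single (I : finType) (F : I -> R) j :
  (forall i, 0 <= F i) -> F j <= \sum_i F i.
Proof.
move=> F0; rewrite (bigD1 j) //= lerDl; exact: sumr_ge0.
Qed.

Lemma mulmx_lip {p q} (A : 'M[R]_(p, q)) (u : 'rV[R]_p) :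
  `|u *m A| <= `|u| * \sum_i \sum_j `|A i j|.
Proof.
apply: norm_le_entries; first by apply: mulr_ge0 => //; apply: sumr_ge0 => i _; apply: sumr_ge0.
move=> i j; rewrite mxE.
apply: le_trans (ler_norm_sum _ _ _) _.
apply: (@le_trans _ _ (\sum_l `|u| * `|A l j|)).
  apply: ler_sum => l _; rewrite normrM; apply: ler_wpM2r => //; exact: entry_le_norm.
rewrite -mulr_sumr; apply: ler_wpM2l => //; apply: ler_sum => l _.
by apply: (@le_sum_single _ (fun j' => `|A l j'|)) => j'; exact: normr_ge0.
Qed.

Lemma mulmx_cont p q (A : 'M[R]_(p, q)) : continuous (fun u : 'rV[R]_p => u *m A).
Proof.
move=> x; apply/(@cvgrPdist_lt _ _ _ (nbhs x)) => e e0.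
set c := \sum_i \sum_j `|A i j|.
have c0 : 0 <= c by apply: sumr_ge0 => i _; apply: sumr_ge0.
near=> z.
rewrite -mulmxBl; apply: (le_lt_trans (mulmx_lip A (x - z))).
apply: (@le_lt_trans _ _ (`|x - z| * (c + 1))).
  by apply: ler_wpM2l => //; rewrite lerDl.
rewrite -ltr_pdivlMr ?ltr_wpDl //.
near: z; apply: cvgr_dist_lt => //.
by rewrite divr_gt0 // ltr_wpDl.
Unshelve. all: by end_near. Qed.

End PartA.

Definition catf T k1 k2 (f : 'I_k1 -> T) (g : 'I_k2 -> T) : 'I_(k1 + k2) -> T :=
  fun i => match fintype.split i with inl a => f a | inr b => g b end.
Arguments catf {T k1 k2}.
Lemma catfL T k1 k2 f g a : @catf T k1 k2 f g (lshift k2 a) = f a.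
Proof. by rewrite /catf (unsplitK (inl a)). Qed.
Lemma catfR T k1 k2 f g b : @catf T k1 k2 f g (rshift k1 b) = g b.
Proof. by rewrite /catf (unsplitK (inr b)). Qed.
Arguments catfL {T k1 k2}.
Arguments catfR {T k1 k2}.

Section PartC.
Variables (R : realType) (n : nat).
Notation V := 'rV[R]_n.

Definition convk k (A : set V) : set V :=
  [set x | exists (w : 'I_k -> R) (p : 'I_k -> V),
      (forall i, 0 <= w i) /\ \sum_(i < k) w i = 1 /\
      (forall i, A (p i)) /\ x = \sum_(i < k) w i *: p i].

Lemma convhullP (A : set V) x : convhull A x <-> exists k, convk k A x.
Proof. by split => [[k [w [p h]]]|[k [w [p h]]]]; exists k, w, p. Qed.

Lemma sub_convhull (A : set V) : A `<=` convhull A.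
Proof.
move=> x Ax; apply/convhullP; exists 1%N, (fun _ => 1), (fun _ => x).
by rewrite !big_ord1 scale1r; split.
Qed.

Lemma convex_convhull (A : set V) : is_convex (convhull A).
Proof.
move=> x y t /convhullP[k1 [w1 [p1 [w10 [s1 [A1 ->]]]]]].
move=> /convhullP[k2 [w2 [p2 [w20 [s2 [A2 ->]]]]]] /andP[t0 t1].
apply/convhullP; exists (k1 + k2)%N, (catf (fun a => (1 - t) * w1 a) (fun b => t * w2 b)), (catf p1 p2).
split; [|split; [|split]].
- move=> i; rewrite /catf; case: fintype.split => a; apply: mulr_ge0 => //; by rewrite subr_ge0.
- rewrite big_split_ord /=.
  under eq_bigr do rewrite catfL.
  under [X in _ + X]eq_bigr do rewrite catfR.
  by rewrite -!mulr_sumr s1 s2 !mulr1 subrK.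
- by move=> i; rewrite /catf; case: fintype.split => a.
- rewrite big_split_ord /=; symmetry.
  under eq_bigr do rewrite !catfL.
  under [X in _ + X]eq_bigr do rewrite !catfR.
  rewrite !scaler_sumr; congr (_ + _); apply: eq_bigr => i _; by rewrite scalerA.
Qed.

Lemma convhull_mx (Q : 'M[R]_n) (A : set V) x : (forall y, A y -> A (y *m Q)) ->
  convhull A x -> convhull A (x *m Q).
Proof.
move=> AQ /convhullP[k [w [p [w0 [s [Ap ->]]]]]].
apply/convhullP; exists k, w, (fun i => p i *m Q); do 3!(split => //).
  by move=> i; apply: AQ.
by rewrite mulmx_suml; apply: eq_bigr => i _; rewrite scalemxAl.
Qed.


Lemma carath k (A : set V) x : (n.+1 < k)%N -> convk k A x -> convk k.-1 A x.
Proof.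
case: k => [//|k] hk [w [p [w0 [s1 [Ap ->]]]]].
set M : 'M[R]_(k.+1, n + 1) := row_mx (\matrix_(i < k.+1) p i) (const_mx 1).
have kne : kermx M != 0.
  rewrite -mxrank_eq0 mxrank_ker subn_eq0 -ltnNge.
  by apply: (leq_ltn_trans (rank_leq_col M)); rewrite addn1.
have [i0 hi0] : exists i, row i (kermx M) != 0.
  case: (pselect (exists i, row i (kermx M) != 0)) => // hno.
  exfalso; move/eqP: kne; apply; apply/row_matrixP => i; rewrite row0.
  by apply/eqP/negPn/negP => h; apply: hno; exists i.
set mu := row i0 (kermx M).
have muM : mu *m M = 0 by apply/sub_kermxP; exact: row_sub.
move: muM; rewrite mul_mx_row -row_mx0 => /eq_row_mx [hP h1].
set m := fun i => mu ord0 i.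
have hP' : \sum_i m i *: p i = 0.
  apply: (etrans _ hP); rewrite mulmx_sum_row; apply: eq_bigr => i _; by rewrite rowK.
have h1' : \sum_i m i = 0.
  move/matrixP: h1 => /(_ ord0 ord0); rewrite !mxE => h; apply: (etrans _ h).
  by apply: eq_bigr => i _; rewrite /m /mu !mxE mulr1.
have [j0 hj0] : exists j, 0 < m j.
  case: (pselect (exists j, 0 < m j)) => // hno; exfalso.
  have mle : forall j, 0 <= - m j.
    by move=> j; rewrite oppr_ge0 leNgt; apply/negP => h; apply: hno; exists j.
  have sN : \sum_i - m i = 0 by rewrite sumrN h1' oppr0.
  move: hi0; rewrite -/mu => /eqP; apply; apply/rowP => i; rewrite mxE.
  have := @psumr_eq0P R _ predT (fun i => - m i) (fun i _ => mle i) sN i isT.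
  by move/eqP; rewrite oppr_eq0 /m /mu !mxE => /eqP.
case: (@arg_minP _ _ _ j0 (fun i => 0 < m i) (fun i => w i / m i) hj0) => j hj hmin.
set sc := w j / m j.
have sc0 : 0 <= sc by apply: divr_ge0 => //; exact: ltW.
set w' := fun i => w i - sc * m i.
have w'0 : forall i, 0 <= w' i.
  move=> i; rewrite /w' subr_ge0.
  case: (ltP 0 (m i)) => hm.
    by rewrite -ler_pdivlMr // ; exact: hmin.
  by apply: le_trans (w0 i); apply: mulr_ge0_le0.
have w'j : w' j = 0 by rewrite /w' /sc divfK ?subrr // gt_eqF.
have sw' : \sum_i w' i = 1 by rewrite /w' sumrB -mulr_sumr h1' mulr0 subr0.
have xw' : \sum_i w i *: p i = \sum_i w' i *: p i.
  rewrite /w'; under [RHS]eq_bigr do rewrite scalerBl -scalerA.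
  by rewrite sumrB -scaler_sumr hP' scaler0 subr0.
exists (fun i => w' (lift j i)), (fun i => p (lift j i)); split => //; split; last split => //.
  by move: sw'; rewrite (bigD1_ord j) //= w'j add0r.
by rewrite xw' (bigD1_ord j) //= w'j scale0r add0r.
Qed.


Lemma convk_pad k m (A : set V) p0 x : A p0 -> convk k A x -> convk (k + m) A x.
Proof.
move=> Ap0 [w [p [w0 [s1 [Ap ->]]]]].
exists (catf w (fun _ => 0)), (catf p (fun _ => p0)).
split; [|split; [|split]].
- by move=> i; rewrite /catf; case: fintype.split.
- rewrite big_split_ord /=.
  under eq_bigr do rewrite catfL.
  under [X in _ + X]eq_bigr do rewrite catfR.
  by rewrite s1 big1 ?addr0.
- by move=> i; rewrite /catf; case: fintype.split.
- rewrite big_split_ord /=; symmetry.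
  under eq_bigr do rewrite !catfL.
  under [X in _ + X]eq_bigr do rewrite !catfR.
  by rewrite [X in _ + X]big1 ?addr0 // => i _; rewrite scale0r.
Qed.

Lemma convk_reduce d (A : set V) x : convk (n.+1 + d) A x -> convk n.+1 A x.
Proof.
elim: d => [|d IH]; first by rewrite addn0.
move=> h; apply: IH; have := @carath (n.+1 + d.+1)%N A x _ h.
by rewrite addnS /=; apply; rewrite ltnS leq_addr.
Qed.

Lemma convhull_convk (A : set V) p0 x : A p0 -> convhull A x -> convk n.+1 A x.
Proof.
move=> Ap0 /convhullP [k hk].
case: (leqP k n.+1) => kn.
  by rewrite -(subnKC kn); apply: convk_pad Ap0 hk.
apply: (@convk_reduce (k - n.+1)); rewrite subnKC //; exact: ltnW.
Qed.

Lemma convk1 (A : set V) x : convk 1 A x -> A x.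
Proof.
by move=> [w [p [_ [s [Ap ->]]]]]; move: s; rewrite !big_ord1 => ->; rewrite scale1r.
Qed.

Lemma convk_split k (A : set V) x : convk k.+2 A x ->
  exists t y c, 0 <= t <= 1 /\ convk k.+1 A y /\ A c /\ x = y + t *: (c - y).
Proof.
move=> [w [p [w0 [s [Ap ->]]]]].
rewrite big_ord_recr /= in s; rewrite big_ord_recr /=.
set t := w ord_max in s *.
set S := \sum_(i < k.+1) _ in s.
have S0 : 0 <= S by apply: sumr_ge0.
have t1 : t <= 1 by rewrite -s lerDr.
case: (eqVneq t 1) => [t_1|tn1].
  exists 0, (p ord_max), (p ord_max); split; first by rewrite lexx ler01.
  split; last split => //.
    exists (fun _ => (k.+1)%:R^-1), (fun _ => p ord_max).
    split; first by move=> i; rewrite invr_ge0 ler0n.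
    split; first by rewrite sumr_const card_ord -[_ *+ _]mulr_natr mulVf // pnatr_eq0.
    split => //; by rewrite -scaler_suml sumr_const card_ord -[_ *+ _]mulr_natr mulVf ?scale1r // pnatr_eq0.
  have S_0 : S = 0 by move: s; rewrite t_1 -{2}(add0r 1) => /addIr.
  rewrite scale0r addr0 t_1 scale1r big1 ?add0r // => i _.
  have := @psumr_eq0P R _ predT (fun i => w (widen_ord (leqnSn k.+1) i)) (fun i _ => w0 _) S_0 i isT.
  by move=> ->; rewrite scale0r.
have t1' : 0 < 1 - t by rewrite subr_gt0 lt_neqAle tn1 t1.
set y := \sum_(i < k.+1) (w (widen_ord (leqnSn k.+1) i) / (1 - t)) *: p (widen_ord (leqnSn k.+1) i).
exists t, y, (p ord_max); split; first by rewrite t1 w0.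
split.
  exists (fun i => w (widen_ord (leqnSn k.+1) i) / (1 - t)), (fun i => p (widen_ord (leqnSn k.+1) i)).
  split; first by move=> i; apply: divr_ge0 => //; exact: ltW.
  split => //.
  by rewrite -mulr_suml -/S (_ : S = 1 - t) ?divff ?gt_eqF // -s addrK.
split => //.
have -> : y + t *: (p ord_max - y) = (1 - t) *: y + t *: p ord_max.
  by rewrite scalerBr scalerBl scale1r addrA addrAC.
congr (_ + _); rewrite /y scaler_sumr; apply: eq_bigr => i _.
by rewrite scalerA mulrC divfK // gt_eqF.
Qed.


Definition fD (z : R * (V * V)) : V := z.2.1 + z.1 *: (z.2.2 - z.2.1).

Lemma fD_cont : continuous fD.
Proof.
move=> z.
have c1 : {for z, continuous (fun z : R * (V * V) => z.1)} by exact: cvg_fst.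
have c2 : {for z, continuous (fun z : R * (V * V) => z.2.1)}.
  apply: continuous_comp; first exact: cvg_snd. exact: cvg_fst.
have c3 : {for z, continuous (fun z : R * (V * V) => z.2.2)}.
  apply: continuous_comp; first exact: cvg_snd. exact: cvg_snd.
apply: (@continuousD _ _ _ (fun z : R * (V * V) => z.2.1) (fun z => z.1 *: (z.2.2 - z.2.1))) => //.
apply: continuousZ => //.
by apply: (@continuousB _ _ _ (fun z : R * (V * V) => z.2.2) (fun z => z.2.1)).
Qed.

Fixpoint Dk (A : set V) k : set V :=
  if k is k'.+1 then fD @` ((`[0, 1]%classic : set R) `*` (Dk A k' `*` A)) else A.

Lemma compact_Dk (A : set V) k : compact A -> compact (Dk A k).
Proof.
move=> cA; elim: k => //= k IH.
apply: continuous_compact; first by apply: continuous_subspaceT => z; exact: fD_cont.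
apply: compact_setX; first exact: segment_compact.
exact: compact_setX.
Qed.

Lemma Dk_sub (A B : set V) k : is_convex B -> A `<=` B -> Dk A k `<=` B.
Proof.
move=> cB AB; elim: k => //= k IH x [[t [y c]] [/= t01 [/IH By /AB Bc]] <-].
rewrite /fD /=.
have -> : y + t *: (c - y) = (1 - t) *: y + t *: c.
  by rewrite scalerBr scalerBl scale1r addrA addrAC.
apply: cB => //; move: t01; by rewrite /= in_itv.
Qed.

Lemma convk_Dk (A : set V) k : convk k.+1 A `<=` Dk A k.
Proof.
elim: k => [|k IH] x; first exact: convk1.
move=> /convk_split [t [y [c [t01 [hy [Ac ->]]]]]].
exists (t, (y, c)) => //; split; last split => //; last exact: IH.
by rewrite /= in_itv.
Qed.

Lemma convhull_Dk (A : set V) : A !=set0 -> convhull A = Dk A n.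
Proof.
move=> [p0 Ap0]; apply/seteqP; split.
  by move=> x hx; apply: convk_Dk; exact: (convhull_convk _ _ _ Ap0 hx).
apply: Dk_sub; [exact: convex_convhull | exact: sub_convhull].
Qed.

Lemma compact_convhull (A : set V) : A !=set0 -> compact A -> compact (convhull A).
Proof. by move=> A0 cA; rewrite convhull_Dk //; exact: compact_Dk. Qed.

End PartC.

Lemma split_nat k (m : nat -> nat) s : (s <= \sum_(i < k) m i)%N ->
  exists b : nat -> nat, (forall i, b i <= m i)%N /\ \sum_(i < k) b i = s.
Proof.
elim: k s => [|k IH] s.
  rewrite big_ord0 leqn0 => /eqP ->; exists (fun _ => 0%N); split => //.
  by rewrite big_ord0.
rewrite big_ord_recr /= => hs.
case: (leqP s (\sum_(i < k) m i)) => h.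
  have [b [bm bs]] := IH _ h.
  exists (fun i => if (i < k)%N then b i else 0%N); split.
    by move=> i; case: ifP.
  rewrite big_ord_recr /= ltnn -bs.
  under eq_bigr do rewrite ltn_ord.
  by rewrite addr0.
exists (fun i => if (i < k)%N then m i else if i == k then (s - \sum_(i < k) m i)%N else 0%N); split.
  move=> i; case: ifP => // _; case: ifP => // /eqP ->.
  by rewrite leq_subLR.
rewrite big_ord_recr /= ltnn eqxx.
under eq_bigr do rewrite ltn_ord.
exact: subnKC (ltnW h).
Qed.

Section PartD.
Variables (R : realType) (n : nat) (H : 'M[R]_n).
Notation V := 'rV[R]_n.

Lemma reflD (a b : V) : refl H (a + b) = refl H a + refl H b.
Proof. by rewrite !reflE mulmxDl. Qed.

Lemma reflZ t (a : V) : refl H (t *: a) = t *: refl H a.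
Proof. by rewrite !reflE scalemxAl. Qed.

Lemma refl_MH (X : set V) x : MH H X x -> MH H X (refl H x).
Proof.
case=> z [a Xa [rb [b Xb <-]] <-] <-.
rewrite reflZ reflD refl_inv.
exists (b + refl H a); last by rewrite addrC.
exists b => //; exists (refl H a) => //; by exists a.
Qed.

Lemma half_half : (1 - 2^-1 : R) = 2^-1.
Proof. by rewrite {1}(splitr 1) mul1r addrK. Qed.

Section WithK.
Variable K : set V.
Let C := MH H K.

Lemma refl_L x : convhull C x -> convhull C (refl H x).
Proof.
move=> hx; rewrite reflE; apply: (convhull_mx _ _ _ _ _ _ hx) => y Cy; rewrite -reflE; exact: refl_MH.
Qed.

Lemma MH_sub (X : set V) : X `<=` convhull C -> MH H X `<=` convhull C.
Proof.
move=> XL x [z [a Xa [rb [b Xb <-]] <-] <-].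
rewrite scalerDr -{1}half_half.
apply: convex_convhull; [exact: XL | exact: refl_L (XL _ Xb) |].
by rewrite invr_ge0 ler0n /= invf_le1 // ler1n.
Qed.

Lemma S_sub j : iter j.+1 (MH H) K `<=` convhull C.
Proof.
elim: j => [|j IH]; first exact: sub_convhull.
exact: MH_sub.
Qed.

End WithK.
End PartD.

Section PartE.
Variables (R : realType) (n : nat) (H : 'M[R]_n) (K : set 'rV[R]_n).
Notation V := 'rV[R]_n.
Let C := MH H K.

Definition Ap (N : nat) : set V :=
  [set x | exists (m : 'I_n.+1 -> nat) (c : 'I_n.+1 -> V),
     (forall i, C (c i)) /\ (\sum_i m i)%N = N /\
     x = N%:R^-1 *: \sum_i (m i)%:R *: c i].

Lemma Ap1 : Ap 1 `<=` C.
Proof.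
move=> x [m [c [Cc [sm ->]]]].
have [i0 hi0] : exists i, m i != 0%N.
  case: (pselect (exists i, m i != 0%N)) => // hno; exfalso.
  move: sm; rewrite big1 // => i _; apply/eqP; apply/negPn/negP => h; apply: hno; by exists i.
move: sm; rewrite (bigD1 i0) //= => sm.
set r := (\sum_(j | j != i0) m j)%N in sm.
have r0 : r = 0%N by move: sm hi0; rewrite -/r; lia.
have mi0 : m i0 = 1%N by move: sm hi0; rewrite -/r; lia.
have rest : forall i, i != i0 -> m i = 0%N.
  move=> i hi; move/eqP: r0; rewrite /r sum_nat_eq0 => /forall_inP /(_ i hi) /eqP //.
rewrite invr1 scale1r (bigD1 i0) //= mi0 scale1r big1 ?addr0 //.
by move=> i hi; rewrite rest // scale0r.
Qed.


Lemma Ap2 N x : (0 < N)%N -> Ap (N + N) x ->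
  exists a b, Ap N a /\ Ap N b /\ x = 2^-1 *: (a + b).
Proof.
move=> N0 [m [c [Cc [sm ->]]]].
have hs : (N <= \sum_(i < n.+1) (fun j => m (inord j)) i)%N.
  under eq_bigr do rewrite /= inord_val.
  by rewrite sm leq_addr.
have [b [bm bs]] := @split_nat n.+1 (fun j => m (inord j)) N hs.
set b1 := fun i : 'I_n.+1 => b i.
set b2 := fun i : 'I_n.+1 => (m i - b i)%N.
have bm' : forall i : 'I_n.+1, (b i <= m i)%N.
  by move=> i; have := bm i; rewrite inord_val.
have sb1 : (\sum_i b1 i)%N = N by [].
have sb12 : (\sum_i b1 i + \sum_i b2 i)%N = (N + N)%N.
  rewrite -sm -big_split /=; apply: eq_bigr => i _; rewrite /b1 /b2.
  exact: subnKC.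
have sb2 : (\sum_i b2 i)%N = N by move: sb12; rewrite sb1; lia.
exists (N%:R^-1 *: \sum_i (b1 i)%:R *: c i), (N%:R^-1 *: \sum_i (b2 i)%:R *: c i).
split; first by exists b1, c.
split; first by exists b2, c.
rewrite -scalerDr scalerA -invfM; congr (_ *: _).
  by rewrite natrD mulr_natl mulr2n.
rewrite -big_split /=; apply: eq_bigr => i _.
by rewrite -scalerDl -natrD /b1 /b2 subnKC.
Qed.

Lemma Ap_S j : Ap (2 ^ j) `<=` iter j.+1 (MH H) K.
Proof.
elim: j => [|j IH]; first exact: Ap1.
move=> x; rewrite expnS mul2n -addnn => /Ap2 [].
  by rewrite expn_gt0.
move=> a [b [Aa [Ab ->]]].
have Sa := IH _ Aa; have Sb := IH _ Ab.
have Srb : iter j.+1 (MH H) K (refl H b) by exact: refl_MH.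
exists (a + refl H (refl H b)); last by rewrite refl_inv.
exists a => //; exists (refl H (refl H b)) => //; by exists (refl H b).
Qed.


Lemma round N x D : (0 < N)%N -> (forall c c', C c -> C c' -> `|c - c'| <= D) ->
  convk _ _ n.+1 C x -> exists y, Ap N y /\ `|x - y| <= n.+1%:R * (N%:R^-1 * D).
Proof.
move=> N0 hD [w [c [w0 [s1 [Cc ->]]]]].
have D0 : 0 <= D by apply: le_trans (hD _ _ (Cc ord0) (Cc ord0)).
have Nr0 : 0 < N%:R :> R by rewrite ltr0n.
set tr := fun i => Num.trunc (w i * N%:R).
set T := (\sum_(i | i != ord0) tr i)%N.
have TN : (T <= N)%N.
  rewrite -(ler_nat R) /T natr_sum.
  apply: (@le_trans _ _ (\sum_(i | i != ord0) w i * N%:R)).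
    by apply: ler_sum => i _; rewrite truncn_le mulr_ge0.
  apply: (@le_trans _ _ (\sum_i w i * N%:R)).
    by rewrite [X in _ <= X](bigD1 ord0) //= lerDr mulr_ge0.
  by rewrite -mulr_suml s1 mul1r.
set mo := fun i : 'I_n.+1 => if i == ord0 then (N - T)%N else tr i.
have smo : (\sum_i mo i)%N = N.
  rewrite (bigD1 ord0) //= /mo eqxx.
  rewrite (eq_bigr tr); last by move=> i /negPf ->.
  by rewrite -/T subnK.
exists (N%:R^-1 *: \sum_i (mo i)%:R *: c i); split; first by exists mo, c.
set e := fun i => w i - N%:R^-1 * (mo i)%:R.
have se : \sum_i e i = 0.
  by rewrite sumrB s1 -mulr_sumr -natr_sum smo mulVf ?subrr // gt_eqF.
have xe : \sum_i w i *: c i - N%:R^-1 *: \sum_i (mo i)%:R *: c i =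
    \sum_i e i *: (c i - c ord0).
  under [RHS]eq_bigr do rewrite scalerBr.
  rewrite sumrB -scaler_suml se scale0r subr0.
  rewrite scaler_sumr -sumrB; apply: eq_bigr => i _; by rewrite scalerA scalerBl.
rewrite xe; apply: le_trans (ler_norm_sum _ _ _) _.
apply: (@le_trans _ _ (\sum_(i < n.+1) (N%:R^-1 * D))); last first.
  by rewrite sumr_const card_ord mulr_natl.
apply: ler_sum => i _; rewrite normrZ.
case: (eqVneq i ord0) => [->|hi].
  by rewrite subrr normr0 mulr0 mulr_ge0 // invr_ge0 ler0n.
have e0 : 0 <= e i.
  by rewrite /e /mo (negPf hi) subr_ge0 ler_pdivrMl // mulrC truncn_le mulr_ge0.
apply: ler_pM => //; last exact: hD.
rewrite ger0_norm // /e /mo (negPf hi) lerBlDr -[X in _ <= X + _]mulr1 -mulrDr ler_pdivlMl // addrC.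
rewrite mulrC natr1; apply: ltW; exact: truncnS_gt.
Qed.

End PartE.

Section PartF.
Variables (R : realType) (n : nat).
Notation V := 'rV[R]_n.

Lemma enormZ t (u : V) : enorm (t *: u) = `|t| * enorm u.
Proof.
rewrite /enorm /dotv (eq_bigr (fun i => t ^+ 2 * (u ord0 i * u ord0 i))); last first.
  by move=> i _; rewrite !mxE mulrACA expr2.
by rewrite -mulr_sumr sqrtrM ?sqr_ge0 // sqrtr_sqr.
Qed.

Lemma enorm0 : enorm (0 : V) = 0.
Proof. by rewrite -(scale0r (0 : V)) enormZ normr0 mul0r. Qed.

Lemma enorm_le (u : V) : enorm u <= n.+1%:R * `|u|.
Proof.
rewrite /enorm -[X in _ <= X]ger0_norm ?mulr_ge0 // -sqrtr_sqr ler_sqrt ?sqr_ge0 //.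
apply: (@le_trans _ _ (\sum_(i < n) `|u| * `|u|)).
  apply: ler_sum => i _; apply: le_trans (ler_norm _) _; rewrite normrM.
  by apply: ler_pM => //; exact: entry_le_norm.
rewrite sumr_const card_ord -[_ *+ n]mulr_natl exprMn -expr2.
apply: ler_wpM2r; first exact: sqr_ge0.
rewrite -natrX ler_nat; nia.
Qed.

Lemma haus_le (A B : set V) eps : 0 < eps -> A `<=` B ->
  (forall x, B x -> exists y, A y /\ enorm (x - y) <= eps) ->
  0 <= hausdorff A B <= eps.
Proof.
move=> e0 AB hB; rewrite /hausdorff.
set E := [set e : R | _].
have Ee : E eps.
  split; first exact: ltW.
  split.
    move=> x Ax; exists x; first exact: AB.
    exists 0; last by rewrite addr0.
    exists 0; last by rewrite scaler0.
    by rewrite /eball /= enorm0 ler01.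
  move=> x Bx; have [y [Ay hy]] := hB x Bx.
  exists y => //; exists (x - y); last by rewrite addrC subrK.
  exists (eps^-1 *: (x - y)); last by rewrite scalerA divff ?scale1r // gt_eqF.
  rewrite /eball /= enormZ ger0_norm; last by rewrite invr_ge0 ltW.
  by rewrite ler_pdivrMl // mulr1.
have lb : lbound E 0 by move=> e [].
apply/andP; split.
  by apply: lb_le_inf => //; exists eps.
by apply: ge_inf => //; exists 0.
Qed.

End PartF.

Lemma compact_MH (R : realType) (n : nat) (K : set 'rV[R]_n) (H : 'M[R]_n) :
  compact K -> compact (MH H K).
Proof.
move=> cK.
set g := fun z : 'rV[R]_n * 'rV[R]_n => (2^-1 : R) *: (z.1 + z.2 *m Qm _ _ H).
have -> : MH H K = g @` (K `*` K).
  apply/seteqP; split.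
    move=> x [z [a Ka [rb [b Kb <-]] <-] <-]; exists (a, b) => //.
    by rewrite /g /= reflE.
  move=> x [[a b] [/= Ka Kb] <-]; exists (a + refl H b).
    exists a => //; exists (refl H b) => //; by exists b.
  by rewrite /g reflE.
apply: continuous_compact; last exact: compact_setX.
apply: continuous_subspaceT => z.
apply: (@continuousZ _ _ _ (fun _ => 2^-1) (fun z : 'rV[R]_n * 'rV[R]_n => z.1 + z.2 *m Qm _ _ H)).
  exact: cvg_cst.
apply: (@continuousD _ _ _ (fun z : 'rV[R]_n * 'rV[R]_n => z.1) (fun z => z.2 *m Qm _ _ H)).
  exact: cvg_fst.
apply: (@continuous_comp _ _ _ snd (fun u : 'rV[R]_n => u *m Qm _ _ H)); first exact: cvg_snd.
exact: (@mulmx_cont R n n (Qm _ _ H)).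
Qed.

Theorem theorem6 (R : realType) (n : nat) (K : set 'rV[R]_n) (H : 'M[R]_n) :
  K !=set0 -> compact K ->
  (1 <= \rank H)%N -> (\rank H <= n.-1)%N ->
  let L := convhull (MH H K) in
  [/\ H_symmetric H L, compact L, is_convex L &
      (fun m : nat => hausdorff (iter m (MH H) K) L) @ \oo --> (0 : R)].
Proof.
move=> [a Ka] cK _ _ L.
set C := MH H K.
have Cne : C !=set0.
  exists (2^-1 *: (a + refl H a)); exists (a + refl H a) => //.
  exists a => //; exists (refl H a) => //; by exists a.
have cC : compact C by exact: compact_MH.
split.
- apply/seteqP; split.
    by move=> _ [x Lx <-]; exact: refl_L.
  move=> x Lx; exists (refl H x); last by rewrite refl_inv.
  exact: refl_L.
- exact: compact_convhull.
- exact: convex_convhull.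
have [p0 Cp0] := Cne.
have [M [_ hM]] := compact_bounded cC.
set B := `|M| + 1.
have CB : forall c, C c -> `|c| <= B.
  by apply: hM; rewrite /B (le_lt_trans (ler_norm M)) // ltrDl.
set D := B + B.
have hD : forall c c', C c -> C c' -> `|c - c'| <= D.
  move=> c c' Cc Cc'; apply: le_trans (ler_normB _ _) _.
  by apply: lerD; apply: CB.
have D0 : 0 <= D by apply: le_trans (hD _ _ Cp0 Cp0).
set c0 := n.+1%:R * n.+1%:R * (D + 1).
have c00 : 0 < c0 by rewrite mulr_gt0 // ?mulr_gt0 ?ltr0n // ltr_wpDl.
have bnd : forall j, 0 <= hausdorff (iter j.+1 (MH H) K) L <= c0 * (2 ^ j)%:R^-1.
  move=> j; set N := (2 ^ j)%N.
  have N0 : (0 < N)%N by rewrite expn_gt0.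
  have Nr0 : 0 < N%:R :> R by rewrite ltr0n.
  apply: haus_le; first by rewrite mulr_gt0 // invr_gt0.
    exact: S_sub.
  move=> x Lx.
  have hx := convhull_convk _ _ _ _ _ Cp0 Lx.
  have [y [Ay hxy]] := round _ _ _ _ _ _ _ N0 hD hx.
  exists y; split; first exact: Ap_S.
  apply: (le_trans (enorm_le _ _ _)).
  apply: le_trans (ler_wpM2l _ hxy) _ => //.
  rewrite /c0 !mulrA [X in _ <= X]mulrAC.
  apply: ler_wpM2l; first by rewrite mulr_ge0 // invr_ge0.
  by rewrite lerDl.
apply: (@squeeze_cvgr _ _ _ _ (fun _ => 0) (geometric (2 * c0) 2^-1)).
- exists 1%N => // m /= hm.
  case: m hm => [//|j] _.
  have := bnd j; rewrite /geometric /= natrX -exprVn exprS.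
  suff -> : 2 * c0 * (2^-1 * 2^-1 ^+ j) = c0 * 2^-1 ^+ j by [].
  by rewrite mulrA (mulrAC 2) divff ?mul1r // pnatr_eq0.
- exact: cvg_cst.
- apply: cvg_geometric; by rewrite ger0_norm ?invr_ge0 // invf_lt1 // ltr1n.
Qed.
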